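(* Let $p\geq 0$ be an integer, $T$ a tree, $H$ a connected graph with at least $p$ vertices, and $V\subseteq V(T(H))$ with $|OC(T,V)|\geq p$ and $V(T)\setminus OC(T,V)\neq\emptyset$. Then $T(H)$ has a matching of size $p$ each of whose edges has one end in $V$ and the other end outside $V$.
   Context: Graph $T(H)$: for a tree $T$ and a graph $H$ with $V(H)=\{1,\dots,m\}$, $T(H)$ has vertices $v^i$ ($v\in V(T)$, $1\le i\le m$); for each $v$, $v^1,\dots,v^m$ span a copy $H^v$ of $H$; and $u^iv^i$ is an edge for each $i$ whenever $uv\in E(T)$. $OC(T,V)=\{u\in V(T): V(H^u)\cap V\neq\emptyset\}$. *)

(* Defs.v *)
From mathcomp Require Import all_boot.
Set Implicit Arguments. Unset Strict Implicit. Unset Printing Implicit Defensive.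

Definition simple_graph (V : finType) (e : rel V) : Prop :=
  symmetric e /\ irreflexive e.

Definition connected_graph (V : finType) (e : rel V) : Prop :=
  forall x y : V, connect e x y.

Definition acyclic_graph (V : finType) (e : rel V) : Prop :=
  forall s : seq V, cycle e s -> uniq s -> size s < 3.

Definition is_tree (V : finType) (e : rel V) : Prop :=
  [/\ simple_graph e, connected_graph e & acyclic_graph e].

(* The graph T(H) on vertex set V(T) x V(H): vertex (v,i) is v^i. *)
Definition TH_edge (T H : finType) (eT : rel T) (eH : rel H) : rel (T * H) :=
  fun x y => ((x.1 == y.1) && eH x.2 y.2) || ((x.2 == y.2) && eT x.1 y.1).

Definition OC (T H : finType) (V : {set T * H}) : {set T} :=
  [set u | [exists i : H, (u, i) \in V]].

Definition is_matching (X : finType) (e : rel X) (M : seq (X * X)) : Prop :=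
  all (fun xy => e xy.1 xy.2) M /\ uniq (map fst M ++ map snd M).

(* Main.v *)
Require Import Defs.
From mathcomp Require Import all_boot zify.

Lemma crossing (X : finType) (e : rel X) (P : pred X) x y :
  connect e x y -> P x -> ~~ P y -> exists a b, [&& e a b, P a & ~~ P b].
Proof.
move=> /connectP [q Hp ->] {y}.
elim: q x Hp => [|z q IH] x /= Hp Px Nl; first by rewrite Px in Nl.
move/andP: Hp => [exz Hp].
case Pz: (P z); first by apply: (IH z Hp Pz Nl).
by exists x, z; rewrite exz Px Pz.
Qed.

Lemma choose_fun (I : eqType) (Y : finType) (y0 : Y) (s : seq I) (Q : I -> pred Y) :
  (forall i, i \in s -> exists y, Q i y) -> exists f : I -> Y, forall i, i \in s -> Q i (f i).
Proof.
move=> H; exists (fun i => odflt y0 [pick y | Q i y]) => i /H [y Qy].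
by case: pickP => [z //|/(_ y)]; rewrite Qy.
Qed.

Lemma build (X I : finType) (e : rel X) (V : {set X}) (g : X -> I) (s : seq I)
  (f : I -> X * X) :
  uniq s -> (forall i, i \in s -> [&& e (f i).1 (f i).2, (f i).1 \in V,
     (f i).2 \notin V, g (f i).1 == i & g (f i).2 == i]) ->
  [/\ is_matching e (map f s), size (map f s) = size s &
      all (fun xy => (xy.1 \in V) && (xy.2 \notin V)) (map f s)].
Proof.
move=> us Hf; split; last first.
- by apply/allP => _ /mapP [i si ->]; have /and5P[] := Hf i si => _ -> -> _ _.
- by rewrite size_map.
split.
  by apply/allP => _ /mapP [i si ->]; have /and5P[] := Hf i si.
rewrite cat_uniq -!map_comp; apply/and3P; split.
- rewrite map_inj_in_uniq // => i j si sj /= Eq.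
  have /and5P[_ _ _ /eqP gi _] := Hf i si.
  have /and5P[_ _ _ /eqP gj _] := Hf j sj.
  by rewrite -gi -gj Eq.
- apply/hasP => [[_ /mapP [i si ->] /mapP [j sj /= Eq]]].
  have /and5P[_ _ Hn _ _] := Hf i si.
  have /and5P[_ Hv _ _ _] := Hf j sj.
  by rewrite Eq Hv in Hn.
- rewrite map_inj_in_uniq // => i j si sj /= Eq.
  have /and5P[_ _ _ _ /eqP gi] := Hf i si.
  have /and5P[_ _ _ _ /eqP gj] := Hf j sj.
  by rewrite -gi -gj Eq.
Qed.

Theorem lemma7 (p : nat) (T H : finType) (eT : rel T) (eH : rel H)
  (V : {set T * H}) :
  is_tree eT -> simple_graph eH -> connected_graph eH ->
  p <= #|H| -> p <= #|OC V| -> OC V != [set: T] ->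
  exists M : seq ((T * H) * (T * H)),
    [/\ is_matching (TH_edge eT eH) M, size M = p &
        all (fun xy => (xy.1 \in V) && (xy.2 \notin V)) M].
Proof.
move=> [_ cT _] _ cH pH pOC nT.
case: p pH pOC => [|p] pH pOC.
  by exists [::]; split => //; split.
have [[u0 i0] V0] : exists x, x \in V.
  have /card_gt0P [u] : 0 < #|OC V| by apply: leq_trans pOC.
  by rewrite inE => /existsP [i Vi]; exists (u, i).
have [w wN] : exists w, w \notin OC V.
  case: (boolP [exists w, w \notin OC V]) => [/existsP//|/existsPn Hn].
  case/negP: nT; apply/eqP/setP => x; rewrite in_setT; by have := Hn x; case: (x \in OC V).
set L := [set i : H | [exists u, (u, i) \in V]].
have y0 : (T * H) * (T * H) := ((u0, i0), (u0, i0)).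
case: (leqP p.+1 #|L|) => HL.
- pose s := take p.+1 (enum L).
  have us : uniq s by rewrite take_uniq ?enum_uniq.
  have ss : size s = p.+1 by rewrite size_take -cardE; case: ifP => Hc; lia.
  pose Q := (fun i xy => [&& TH_edge eT eH xy.1 xy.2,
     xy.1 \in V, xy.2 \notin V, xy.1.2 == i & xy.2.2 == i]).
  have [f Hf] : exists f : H -> _, forall i, i \in s -> Q i (f i).
    apply: (@choose_fun _ _ y0 s Q).
    move=> i /mem_take; rewrite mem_enum inE => /existsP [u Vu].
    have wi : (w, i) \notin V by apply: contra wN => ?; rewrite inE; apply/existsP; exists i.
    have [a [b /and3P [ab Va Vb]]] := @crossing _ eT (fun v => (v, i) \in V) u w (cT u w) Vu wi.
    by exists ((a, i), (b, i)); rewrite /Q /= Va Vb /TH_edge /= eqxx ab orbT.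
  have [M1 M2 M3] := @build _ _ (TH_edge eT eH) V snd s f us Hf.
  by exists (map f s); rewrite M2 ss.
- pose s := take p.+1 (enum (OC V)).
  have us : uniq s by rewrite take_uniq ?enum_uniq.
  have ss : size s = p.+1 by rewrite size_take -cardE; case: ifP => Hc; lia.
  pose Q := (fun u xy => [&& TH_edge eT eH xy.1 xy.2,
     xy.1 \in V, xy.2 \notin V, xy.1.1 == u & xy.2.1 == u]).
  have [f Hf] : exists f : T -> _, forall i, i \in s -> Q i (f i).
    apply: (@choose_fun _ _ y0 s Q).
    move=> u /mem_take; rewrite mem_enum inE => /existsP [a Va].
    have [b Vb] : exists b, (u, b) \notin V.
      case: (pickP (fun b => (u, b) \notin V)) => [b Vb|Hn]; first by exists b.
      have LT : L = setT.
        apply/setP => i; rewrite !inE; apply/existsP; exists u.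
        by have := Hn i; case: ((u, i) \in V).
      by move: HL; rewrite LT cardsT ltnNge pH.
    have [c [d /and3P [cd Vc Vd]]] := @crossing _ eH (fun v => (u, v) \in V) a b (cH a b) Va Vb.
    by exists ((u, c), (u, d)); rewrite /Q /= Vc Vd /TH_edge /= eqxx cd.
  have [M1 M2 M3] := @build _ _ (TH_edge eT eH) V fst s f us Hf.
  by exists (map f s); rewrite M2 ss.
Qed.
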